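(* Consider RejectionSampling run on $P$ and $k$ with parameter $c>1$, and assume the LSH data structure is successful. In the first iteration in which a point is added to $S$ (i.e. when $S=\emptyset$), each point $x\in P$ is the point added with probability $1/n$. In every later step, given the current set $S\neq\emptyset$, the probability that the next point added to $S$ is $x\in P$ equals $\dfrac{\mathrm{Dist}(x,\mathrm{Query}(x))^2}{\sum_{y\in P}\mathrm{Dist}(y,\mathrm{Query}(y))^2}$, where Query is answered by the LSH data structure containing the points of $S$; in particular this probability does not depend on the random multi-tree embedding.
   Context: $P\subseteq\mathbb{R}^d$ has $n$ points; $\mathrm{Dist}(x,y)=\|x-y\|_2$, $\mathrm{Dist}(x,C)=\min_{y\in C}\mathrm{Dist}(x,y)$. Tree embedding: compute $\mathrm{MaxDist}$, an upper bound on the maximum pairwise distance within factor $2$ of it; add a uniformly random shift $s\in[0,\mathrm{MaxDist}]$ to each coordinate of all points; the root (height $0$) is the axis-aligned cube of side $2\,\mathrm{MaxDist}$ centered at an input point; recursively each node cube of side $L$ at height $i$ is split into $2^d$ subcubes of side $L/2$, nonempty ones becoming children connected by edges of weight $\sqrt d\,\mathrm{MaxDist}/2^i$, until each cube holds at most one point. $\mathrm{TreeDist}_T$ is the shortest-path distance in tree $T$; the multi-tree embedding has three such trees with independent shifts, $\mathrm{MultiTreeDist}$ is the minimum of the three tree distances, $\mathrm{MultiTreeDist}(p,S)=\min_{q\in S}\mathrm{MultiTreeDist}(p,q)$. MultiTreeSample() returns each $x\in P$ with probability $\mathrm{MultiTreeDist}(x,S)^2/\sum_{y\in P}\mathrm{MultiTreeDist}(y,S)^2$,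 where $S$ is the set of points opened so far by MultiTreeOpen (with $\mathrm{MultiTreeDist}(x,\emptyset)^2$ a constant $M$ independent of $x$). LSH data structure (parameter $c$): supports Insert$(p)$ and Query$(p)$; it is successful if Query$(p)$ always returns an inserted point at distance at most $c\cdot\delta$ from $p$, where $\delta$ is the minimum distance from $p$ to an inserted point. RejectionSampling$(P,k)$: $S\leftarrow\emptyset$; build the multi-tree embedding; while $|S|<k$: $x\leftarrow$ MultiTreeSample(); with probability $\min\{1,\mathrm{Dist}(x,\mathrm{Query}(x))^2/(c^2\,\mathrm{MultiTreeDist}(x,S)^2)\}$ (probability $1$ when $S=\emptyset$): $S\leftarrow S\cup\{x\}$, MultiTreeOpen$(x)$, Insert$(x)$. Output $S$. *)

(* Defs.v *)
From HB Require Import structures.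
From mathcomp Require Import all_boot all_order all_algebra.
From mathcomp Require Import all_classical all_reals all_analysis.
Set Implicit Arguments. Unset Strict Implicit. Unset Printing Implicit Defensive.
Import Order.TTheory GRing.Theory Num.Theory numFieldNormedType.Exports.
Local Open Scope classical_set_scope.
Local Open Scope ring_scope.

Section RS.
Variables (R : realType) (d : nat).
Local Notation pt := 'rV[R]_d.

Definition Dist (x y : pt) : R := Num.sqrt (\sum_(j < d) (x ord0 j - y ord0 j) ^+ 2).

(* minimum of f over a nonempty sequence (value on [::] is irrelevant: 0) *)
Definition seqmin (f : pt -> R) (S : seq pt) : R :=
  match S with
  | [::] => 0
  | q :: S' => foldr Num.min (f q) (map f S')
  end.

Definition DistSet (x : pt) (S : seq pt) : R := seqmin (Dist x) S.

Definition MaxDist_ok (P : seq pt) (Mx : R) : Prop :=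
  (forall x y, x \in P -> y \in P -> Dist x y <= Mx) /\
  (exists x y, [/\ x \in P, y \in P & Mx <= 2 * Dist x y]).

Section Tree.
Variables (P : seq pt) (Mx : R) (p0 s : pt).

Definition tree_param_ok : Prop :=
  p0 \in P /\ forall j, 0 <= s ord0 j <= Mx.

(* index of the cube of side 2 Mx / 2^i containing the shifted point x + s,
   on the grid whose origin is the corner of the root cube
   (of side 2 Mx, centred at p0 + s) *)
Definition cell (i : nat) (x : pt) : 'rV[int]_d :=
  \row_j Num.floor ((x ord0 j + s ord0 j - (p0 ord0 j + s ord0 j - Mx))
                    * 2 ^+ i / (2 * Mx)).

Definition same_node (i : nat) (x y : pt) : bool :=
  (i == 0)%N || (cell i x == cell i y).

Definition is_leaf (i : nat) (x : pt) : bool :=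
  all (fun y => (y == x) || ~~ same_node i x y) P.

Definition leaf_height (x : pt) : nat :=
  match pselect (exists i, is_leaf i x) with
  | left e => ex_minn e
  | right _ => 0%N
  end.

Definition edge_w (j : nat) : R := Num.sqrt (d%:R) * Mx / 2 ^+ j.

(* shortest-path distance between the leaves of x and y: the path uses the edge
   below height j on x's side iff j < leaf_height x and x, y are in different
   nodes at height j+1 (symmetrically for y) *)
Definition TreeDist (x y : pt) : R :=
  \sum_(j < leaf_height x) (~~ same_node j.+1 x y)%:R * edge_w j +
  \sum_(j < leaf_height y) (~~ same_node j.+1 x y)%:R * edge_w j.
End Tree.

(* multi-tree embedding: three trees, each given by (centre point, shift) *)
Definition MultiTreeDist (P : seq pt) (Mx : R) (t1 t2 t3 : pt * pt) (x y : pt) : R :=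
  Num.min (TreeDist P Mx t1.1 t1.2 x y)
    (Num.min (TreeDist P Mx t2.1 t2.2 x y) (TreeDist P Mx t3.1 t3.2 x y)).

Definition MTweight (P : seq pt) (Mx M0 : R) (t1 t2 t3 : pt * pt)
  (S : seq pt) (x : pt) : R :=
  if S is [::] then M0 else seqmin (MultiTreeDist P Mx t1 t2 t3 x) S ^+ 2.

Definition MTsample (P : seq pt) (Mx M0 : R) (t1 t2 t3 : pt * pt)
  (S : seq pt) (x : pt) : R :=
  MTweight P Mx M0 t1 t2 t3 S x / \sum_(y <- P) MTweight P Mx M0 t1 t2 t3 S y.

Definition accept_prob (P : seq pt) (Mx M0 c : R) (t1 t2 t3 : pt * pt)
  (Query : pt -> pt) (S : seq pt) (x : pt) : R :=
  if S is [::] then 1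
  else Num.min 1 (Dist x (Query x) ^+ 2 /
                  (c ^+ 2 * seqmin (MultiTreeDist P Mx t1 t2 t3 x) S ^+ 2)).

Definition lsh_successful (c : R) (S : seq pt) (Query : pt -> pt) : Prop :=
  forall p, Query p \in S /\ Dist p (Query p) <= c * DistSet p S.

(* Probability that the next point added to S (by the repeated independent
   trials "x <- sample; accept with probability acc x") is x equals p:
   sum over t of P(first t trials rejected) * P(trial t+1 draws and accepts x). *)
Definition next_added_prob (P : seq pt) (samp acc : pt -> R) (x : pt) (p : R) : Prop :=
  cvg_to ((fun N : nat => \sum_(t < N)
     (1 - \sum_(y <- P) samp y * acc y) ^+ t * (samp x * acc x)) @ \oo) (nbhs p).

End RS.

(* Main.v *)
Require Import Defs.
From HB Require Import structures.
From mathcomp Require Import all_boot all_order all_algebra.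
From mathcomp Require Import all_classical all_reals all_analysis.
From mathcomp.algebra_tactics Require Import ring lra.
Import Order.TTheory GRing.Theory Num.Theory numFieldNormedType.Exports.
Set Implicit Arguments. Unset Strict Implicit. Unset Printing Implicit Defensive.
Local Open Scope classical_set_scope.
Local Open Scope ring_scope.

Section H.
Variables (R : realType) (d : nat).
Local Notation pt := 'rV[R]_d.

Lemma seqmin_in (f : pt -> R) (S : seq pt) : S != [::] ->
  exists2 s, s \in S & seqmin f S = f s.
Proof.
case: S => [//|q S] _ /=.
elim: S => [|a S IH] /=; first by exists q; rewrite ?mem_head.
case: IH => s sin ->.
rewrite /Num.min; case: ifP => _.
- by exists a; rewrite // !inE eqxx orbT.
- exists s => //; move: sin; rewrite !inE => /orP[->|->]; by rewrite ?orbT.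
Qed.

Lemma seqmin_le (f : pt -> R) (S : seq pt) s : s \in S -> seqmin f S <= f s.
Proof.
case: S => [//|q S] /=.
elim: S s => [|a S IH] s /=; first by rewrite inE => /eqP->.
rewrite !inE => H.
case/orP: H => [/eqP->|/orP[/eqP->|H]].
- by rewrite ge_min IH ?mem_head ?orbT.
- by rewrite ge_min lexx.
- by rewrite ge_min IH ?orbT // inE H orbT.
Qed.

Lemma seqmin_mono (f g : pt -> R) (S : seq pt) :
  (forall s, s \in S -> f s <= g s) -> seqmin f S <= seqmin g S.
Proof.
move=> H; case: (S =P [::]) => [->//|/eqP Sn].
case: (seqmin_in g Sn) => s sS ->.
exact: le_trans (seqmin_le f sS) (H s sS).
Qed.

Lemma Dist_ge0 (x y : pt) : 0 <= Dist x y.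
Proof. exact: sqrtr_ge0. Qed.

Lemma Dist_xx (x : pt) : Dist x x = 0.
Proof.
rewrite /Dist big1 ?sqrtr0 // => j _; by rewrite subrr expr0n.
Qed.

Lemma Dist_eq0 (x y : pt) : Dist x y = 0 -> x = y.
Proof.
move/eqP; rewrite /Dist sqrtr_eq0 => H.
have H0 : \sum_(j < d) (x ord0 j - y ord0 j) ^+ 2 = 0.
  by apply/eqP; rewrite eq_le H sumr_ge0 // => j _; rewrite sqr_ge0.
apply/rowP => j.
have := (psumr_eq0P (fun j _ => sqr_ge0 (x ord0 j - y ord0 j)) H0 (i:=j) isT).
by move/eqP; rewrite sqrf_eq0 subr_eq0 => /eqP.
Qed.

Lemma Dist_gt0 (x y : pt) : x != y -> 0 < Dist x y.
Proof.
move=> xy; rewrite lt_neqAle Dist_ge0 andbT; apply/eqP => H.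
by move/eqP: xy; apply; apply: Dist_eq0.
Qed.

Lemma geo_lim (r a : R) : 0 <= r < 1 ->
  cvg_to ((fun N : nat => \sum_(t < N) r ^+ t * a) @ \oo) (nbhs (a / (1 - r))).
Proof.
move=> /andP[r0 r1].
have H := @cvg_geometric_series R a r.
have -> : (fun N : nat => \sum_(t < N) r ^+ t * a) = series (geometric a r).
  apply/funext => N; rewrite /series /= big_mkord; apply: eq_bigr => t _.
  by rewrite mulrC.
by apply: H; rewrite ger0_norm.
Qed.

Lemma sum_ge_elem (F : pt -> R) (L : seq pt) x :
  (forall y, y \in L -> 0 <= F y) -> x \in L -> F x <= \sum_(y <- L) F y.
Proof.
elim: L => [//|a L IH] H; rewrite big_cons inE => /orP[/eqP->|xL].
- rewrite lerDl big_seq sumr_ge0 // => y yL; apply: H.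
  by rewrite inE yL orbT.
- apply: le_trans (IH _ xL) _.
    by move=> y yL; apply: H; rewrite inE yL orbT.
  by rewrite lerDr H // mem_head.
Qed.

End H.
Section T.
Variables (R : realType) (d : nat).
Local Notation pt := 'rV[R]_d.
Variables (P : seq pt) (Mx : R) (p0 s : pt).
Hypothesis Mx0 : 0 < Mx.

Lemma cell_close i (x y : pt) j : cell Mx p0 s i x = cell Mx p0 s i y ->
  `|x ord0 j - y ord0 j| < 2 * Mx / 2 ^+ i.
Proof.
move/rowP/(_ j); rewrite !mxE => E.
set a := (x ord0 j + _ - _) * _ / _ in E.
set b := (y ord0 j + _ - _) * _ / _ in E.
have ha := floor_itv a; have hb := floor_itv b.
rewrite E in ha; rewrite !intrD in ha hb.
have hab : `|a - b| < 1.
  case/andP: ha => ha1 ha2; case/andP: hb => hb1 hb2.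
  rewrite ltr_norml; apply/andP; split; lra.
have K0 : 0 < 2 ^+ i :> R by rewrite exprn_gt0.
rewrite (_ : a - b = (x ord0 j - y ord0 j) * (2 ^+ i / (2 * Mx))) in hab; last first.
  rewrite /a /b; ring.
rewrite normrM (ger0_norm (_ : 0 <= 2 ^+ i / (2 * Mx))) in hab; last first.
  by rewrite divr_ge0 // ?ltW // mulr_gt0.
rewrite ltr_pdivlMr // -(mul1r (2 * Mx)) -ltr_pdivrMr ?mulr_gt0 //.
by rewrite -mulrA.
Qed.

Lemma sep (x y : pt) : x != y ->
  exists2 j, x ord0 j != y ord0 j & exists i0, forall i, (i0 <= i)%N -> cell Mx p0 s i x != cell Mx p0 s i y.
Proof.
move=> xy.
have /existsP [j Hj] : [exists j, x ord0 j != y ord0 j].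
  move: xy; apply: contraNT => /existsPn H; apply/eqP/rowP => j.
  by have := H j; rewrite negbK => /eqP.
exists j => //.
set del := `|x ord0 j - y ord0 j|.
have del0 : 0 < del by rewrite normr_gt0 subr_eq0.
exists (Num.trunc (2 * Mx / del)).+1 => i Hi.
apply/negP => /eqP /(cell_close j).
rewrite -/del ltr_pdivlMr ?exprn_gt0 // => H.
have H1 := truncnS_gt (2 * Mx / del).
have H2 : ((Num.trunc (2 * Mx / del)).+1%:R : R) <= 2 ^+ i.
  rewrite -natrX ler_nat; apply: leq_trans Hi _; exact: ltnW (ltn_expl _ _).
have H3 : 2 * Mx / del < 2 ^+ i := lt_le_trans H1 H2.
move: H3; rewrite ltr_pdivrMr // => H3.
have : del * 2 ^+ i < del * 2 ^+ i.
  rewrite [X in _ < X]mulrC; exact: lt_trans H H3.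
by rewrite ltxx.
Qed.

Lemma leaf_ex (x : pt) : exists i, is_leaf P Mx p0 s i x.
Proof.
suff [i0 H] : exists i0, forall i, (i0 <= i)%N ->
    all (fun y => (y == x) || ~~ same_node Mx p0 s i x y) P.
  by exists i0; apply: H.
elim: P => [|a L [i1 IH]]; first by exists 0%N.
case: (eqVneq a x) => [->|ax].
  by exists i1 => i Hi /=; rewrite eqxx IH.
have xa : x != a by rewrite eq_sym.
case: (sep xa) => j _ [i2 H2].
exists (maxn (maxn i1 i2) 1) => i Hi /=.
rewrite IH; last by apply: leq_trans Hi; rewrite leq_max leq_max leqnn.
have hi2 : (i2 <= i)%N by apply: leq_trans Hi; rewrite leq_max leq_max leqnn orbT.
rewrite /same_node (negbTE (H2 i hi2)).
have : (i != 0)%N by rewrite -lt0n; apply: leq_trans Hi; rewrite leq_max leqnn orbT.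
by move=> /negbTE ->; rewrite orbT.
Qed.

Lemma leaf_ge (u v : pt) m : v \in P -> v != u ->
  (forall i, (i < m)%N -> same_node Mx p0 s i u v) ->
  (m <= leaf_height P Mx p0 s u)%N.
Proof.
move=> vP vu Hs; rewrite /leaf_height; case: pselect => [e|ne]; last first.
  by exfalso; apply: ne; apply: leaf_ex.
case: (ex_minnP e) => h Hh _.
rewrite leqNgt; apply/negP => hm.
move/allP: Hh => /(_ v vP); rewrite (negbTE vu) /= Hs //.
Qed.

Lemma sum_ge_term h m (F : nat -> R) : (m < h)%N -> (forall j, 0 <= F j) ->
  F m <= \sum_(j < h) F j.
Proof.
move=> mh F0; rewrite (bigD1 (Ordinal mh)) //= lerDl sumr_ge0 //.
Qed.

Lemma edge_w_ge0 j : 0 <= edge_w d Mx j.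
Proof. by rewrite /edge_w divr_ge0 ?exprn_ge0 // mulr_ge0 ?sqrtr_ge0 // ltW. Qed.

Lemma tree_dom (x y : pt) : x \in P -> y \in P -> Dist x y <= Mx ->
  Dist x y <= TreeDist P Mx p0 s x y.
Proof.
move=> xP yP DM.
case: (eqVneq x y) => [->|xy].
  rewrite Dist_xx /TreeDist addr_ge0 // sumr_ge0 // => i _;
  by rewrite mulr_ge0 ?ler0n ?edge_w_ge0.
have [j jn [i0 Hi0]] := sep xy.
have ex : exists i, ~~ same_node Mx p0 s i x y.
  exists (maxn i0 1); rewrite /same_node negb_or Hi0 ?leq_maxl // andbT.
  by rewrite -lt0n leq_maxr.
case: (ex_minnP ex) => m Hm Hmin.
have Hlt : forall i, (i < m)%N -> same_node Mx p0 s i x y.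
  move=> i im; apply/negPn/negP => /Hmin; by rewrite leqNgt im.
have m0 : (0 < m)%N by rewrite lt0n; apply: contraNneq Hm => ->.
have lx : (m <= leaf_height P Mx p0 s x)%N.
  by apply: (leaf_ge yP); rewrite // eq_sym.
have ly : (m <= leaf_height P Mx p0 s y)%N.
  apply: (leaf_ge xP) => // i im; move: (Hlt i im); rewrite /same_node; case: (i == 0)%N => //=; by rewrite eq_sym.
have T : 2 * edge_w d Mx m.-1 <= TreeDist P Mx p0 s x y.
  have F1 : (~~ same_node Mx p0 s m.-1.+1 x y)%:R * edge_w d Mx m.-1 = edge_w d Mx m.-1.
    by rewrite prednK // Hm mul1r.
  have F0 : forall j, 0 <= (~~ same_node Mx p0 s j.+1 x y)%:R * edge_w d Mx j.
    by move=> i; rewrite mulr_ge0 ?ler0n ?edge_w_ge0.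
  rewrite /TreeDist (_ : 2 * edge_w d Mx m.-1 = edge_w d Mx m.-1 + edge_w d Mx m.-1); last by ring.
  rewrite -{1 2}F1; apply: lerD; apply: (sum_ge_term (F := fun j => (~~ same_node Mx p0 s j.+1 x y)%:R * edge_w d Mx j)) => //; by rewrite prednK.
apply: le_trans T.
have d0 : (0 < d)%N by apply: leq_ltn_trans (leq0n j) (ltn_ord j).
have q1 : 1 <= Num.sqrt (d%:R : R).
  have : (1:R) <= d%:R by rewrite ler1n.
  by move/ler_wsqrtr; rewrite sqrtr1.
rewrite /edge_w.
case: (eqVneq m.-1 0%N) => [->|k0].
  rewrite expr0 divr1; apply: le_trans DM _.
  have h : 0 <= (Num.sqrt d%:R - 1) * Mx by rewrite mulr_ge0 ?subr_ge0 // ltW.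
  rewrite mulrBl mul1r subr_ge0 in h.
  have : 0 <= Num.sqrt (d%:R : R) * Mx by rewrite mulr_ge0 ?sqrtr_ge0 // ltW.
  lra.
have := Hlt m.-1; rewrite prednK // leqnn /same_node (negbTE k0) /= => /(_ isT) /eqP C.
set L := 2 * Mx / 2 ^+ m.-1.
have L0 : 0 <= L by rewrite divr_ge0 ?exprn_ge0 // mulr_ge0 // ltW.
have -> : 2 * (Num.sqrt d%:R * Mx / 2 ^+ m.-1) = Num.sqrt d%:R * L.
  by rewrite /L; ring.
rewrite /Dist -(ger0_norm L0) -sqrtr_sqr -sqrtrM ?ler0n //.
apply: ler_wsqrtr.
rewrite (_ : d%:R * L ^+ 2 = \sum_(i < d) L ^+ 2); last first.
  by rewrite sumr_const card_ord mulr_natl.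
apply: ler_sum => i _.
have := cell_close i C; rewrite -/L ltr_norml => /andP[h1 h2].
nra.
Qed.

End T.

Section M.
Variables (R : realType) (d : nat).
Local Notation pt := 'rV[R]_d.

Lemma mt_dom (P : seq pt) Mx (t1 t2 t3 : pt * pt) y s :
  MaxDist_ok P Mx -> y \in P -> s \in P -> y != s ->
  Dist y s <= MultiTreeDist P Mx t1 t2 t3 y s.
Proof.
move=> [HM _] yP sP ys.
have DM := HM _ _ yP sP.
have Mx0 : 0 < Mx := lt_le_trans (Dist_gt0 ys) DM.
rewrite /MultiTreeDist !le_min.
by rewrite !(tree_dom _ _ Mx0).
Qed.

Lemma sum_const_seq (L : seq pt) (a : R) : \sum_(y <- L) a = a *+ size L.
Proof. elim: L => [|b L IH]; by rewrite ?big_nil ?big_cons ?IH ?mulrS. Qed.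

End M.

Unset Implicit Arguments. Set Strict Implicit.

Theorem mainTheorem7 (R : realType) (d k : nat) (P : seq 'rV[R]_d)
  (c Mx M0 : R) (t1 t2 t3 : 'rV[R]_d * 'rV[R]_d) :
  uniq P -> (0 < size P)%N -> 1 < c -> 0 < M0 ->
  MaxDist_ok P Mx ->
  tree_param_ok P Mx t1.1 t1.2 -> tree_param_ok P Mx t2.1 t2.2 ->
  tree_param_ok P Mx t3.1 t3.2 ->
  (* first addition, S = empty *)
  (forall (Query : 'rV[R]_d -> 'rV[R]_d) x, x \in P ->
     next_added_prob P (MTsample P Mx M0 t1 t2 t3 [::])
       (accept_prob P Mx M0 c t1 t2 t3 Query [::]) x (1 / (size P)%:R))
  /\
  (* later steps, S nonempty *)
  (forall (S : seq 'rV[R]_d) (Query : 'rV[R]_d -> 'rV[R]_d),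
     uniq S -> {subset S <= P} -> S != [::] -> (size S < k)%N ->
     lsh_successful c S Query ->
     forall x, x \in P ->
       next_added_prob P (MTsample P Mx M0 t1 t2 t3 S)
         (accept_prob P Mx M0 c t1 t2 t3 Query S) x
         (Dist x (Query x) ^+ 2 / \sum_(y <- P) Dist y (Query y) ^+ 2)).
Proof.
move=> uP nP c1 M00 HM _ _ _; split.
  move=> Query x xP.
  rewrite /next_added_prob /MTsample /MTweight /accept_prob sum_const_seq.
  set a := M0 / (M0 *+ size P).
  have n0 : (size P)%:R != 0 :> R by rewrite pnatr_eq0 -lt0n.
  have Ma : M0 *+ size P = M0 * (size P)%:R by rewrite mulr_natr.
  rewrite (_ : \sum_(y <- P) a * 1 = 1); last first.
    rewrite sum_const_seq mulr1 /a -mulrnAl mulfV //.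
    by rewrite Ma mulf_neq0 // gt_eqF.
  rewrite subrr mulr1.
  have -> : 1 / (size P)%:R = a / (1 - 0) by rewrite subr0 divr1 /a Ma; field; rewrite n0 gt_eqF.
  by apply: geo_lim; rewrite lexx ltr01.
move=> [//|s0 S'] Query uS sub _ _ lsh x xP.
set S := s0 :: S'.
have Sn : S != [::] by [].
have c0 : 0 < c by apply: lt_trans c1; rewrite ltr01.
rewrite /next_added_prob /MTsample /MTweight /accept_prob -/S.
set MT := MultiTreeDist P Mx t1 t2 t3.
set W := \sum_(y <- P) seqmin (MT y) S ^+ 2.
set Q := \sum_(y <- P) Dist y (Query y) ^+ 2.
have W0 : 0 <= W by rewrite /W big_seq sumr_ge0 // => y _; rewrite sqr_ge0.
have Q0 : 0 <= Q by rewrite /Q big_seq sumr_ge0 // => y _; rewrite sqr_ge0.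
have key : forall y, y \in P ->
  seqmin (MT y) S ^+ 2 / W *
    Num.min 1 (Dist y (Query y) ^+ 2 / (c ^+ 2 * seqmin (MT y) S ^+ 2))
  = Dist y (Query y) ^+ 2 / (c ^+ 2 * W) /\
  Dist y (Query y) ^+ 2 <= c ^+ 2 * seqmin (MT y) S ^+ 2.
  move=> y yP.
  have [QS QD] := lsh y.
  have D0 := Dist_ge0 y (Query y).
  have [s1 s1S Ds1] := seqmin_in (Dist y) Sn.
  have Ds0 : 0 <= DistSet y S by rewrite /DistSet Ds1 Dist_ge0.
  case yS: (y \in S).
    have Ds00 : DistSet y S <= 0 by rewrite -(Dist_xx y); apply: seqmin_le.
    have DD : Dist y (Query y) = 0.
      apply/eqP; rewrite eq_le D0 andbT; apply: le_trans QD _; nra.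
    rewrite DD expr0n /= !mul0r min_r ?mulr0 //; split=> //.
    by rewrite mulr_ge0 ?sqr_ge0.
  have ys1 : y != s1 by apply: contraFneq yS => ->.
  have Dsp : 0 < DistSet y S by rewrite /DistSet Ds1 Dist_gt0.
  have Dsm : DistSet y S <= seqmin (MT y) S.
    apply: seqmin_mono => s2 s2S; apply: mt_dom => //; first exact: sub.
    by apply: contraFneq yS => ->.
  have m0 : 0 < seqmin (MT y) S := lt_le_trans Dsp Dsm.
  have Dcm : Dist y (Query y) <= c * seqmin (MT y) S.
    apply: le_trans QD _; rewrite ler_pM2l //.
  have bound : Dist y (Query y) ^+ 2 <= c ^+ 2 * seqmin (MT y) S ^+ 2.
    by rewrite -exprMn !expr2 ler_pM.
  split=> //.
  have Wp : 0 < W.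
    apply: lt_le_trans (_ : 0 < seqmin (MT y) S ^+ 2) _; first by rewrite exprn_gt0.
    by apply: (sum_ge_elem (F := fun y => seqmin (MT y) S ^+ 2)) => // z _; rewrite sqr_ge0.
  rewrite min_r; last first.
    by rewrite ler_pdivrMr ?mul1r // mulr_gt0 ?exprn_gt0.
  field.
  by rewrite !gt_eqF.
have QW : Q <= c ^+ 2 * W.
  rewrite /Q /W mulr_sumr big_seq [X in _ <= X]big_seq; apply: ler_sum => y yP.
  by case: (key y yP).
have Esum : \sum_(y <- P) seqmin (MT y) S ^+ 2 / W *
    Num.min 1 (Dist y (Query y) ^+ 2 / (c ^+ 2 * seqmin (MT y) S ^+ 2))
    = Q / (c ^+ 2 * W).
  rewrite /Q mulr_suml; apply: eq_big_seq => y yP; by case: (key y yP).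
rewrite Esum (proj1 (key x xP)).
have Dx : Dist x (Query x) ^+ 2 <= Q.
  by apply: (sum_ge_elem (F := fun y => Dist y (Query y) ^+ 2)) => // z _; rewrite sqr_ge0.
case: (eqVneq Q 0) => [Qz|Qn].
  have Dx0 : Dist x (Query x) ^+ 2 = 0 by apply/eqP; rewrite eq_le sqr_ge0 andbT -Qz.
  rewrite Qz Dx0 !mul0r.
  have -> : (fun N : nat => \sum_(t < N) (1 - 0 : R) ^+ t * 0) = fun _ => (0 : R).
    by apply: funext => N; rewrite big1 // => t _; rewrite mulr0.
  exact: cvg_cst.
have Qp : 0 < Q by rewrite lt_neqAle eq_sym Qn.
have cW : 0 < c ^+ 2 * W := lt_le_trans Qp QW.
have Wp : 0 < W.
  by move: cW; rewrite pmulr_rgt0 // exprn_gt0.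
have -> : Dist x (Query x) ^+ 2 / Q =
  (Dist x (Query x) ^+ 2 / (c ^+ 2 * W)) / (1 - (1 - Q / (c ^+ 2 * W))).
  field; by rewrite !gt_eqF // opprB addrC subrK.
apply: geo_lim; apply/andP; split.
  by rewrite subr_ge0 ler_pdivrMr // mul1r.
by rewrite ltrBlDr ltrDl divr_gt0.
Qed.
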